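(* In the calculus described in the context, for every well-typed expression $e:A\leadsto B$ (in which every user-defined operation carries a consistent incrementalization, and every occurrence of $+$ is at a type $A$ with $[\![A]\!]=[\![A]\!]'$ and with $\oplus$ associative and commutative on $[\![A]\!]$), the triple $(C_e,i_e,d_e)$ produced by the incrementalization transformation is a value preserving incrementalization of $[\![e]\!]$: for all $x\in[\![A]\!]$ and all finite lists $xs'$ of changes in $[\![A]\!]'$, $(\mathsf{iter}\,(C_e,i_e,d_e)\,x\,xs')_1=[\![e]\!](\mathsf{sum}\,x\,xs')$.
   Context: Fix a container: a type $S$ of shapes and for each $s:S$ an index type $\mathrm{Pos}(s)$ with decidable equality. Fix a base change structure $(\beta,\beta',\oplus,\ominus)$ with $x\oplus(y\ominus x)=y$. Object types: $A,B::=\mathsf{b}\mid F_sA\mid A\times B\mid A+B$. Value/change types with $\oplus,\ominus$: $[\![\mathsf b]\!]=\beta$, $[\![\mathsf b]\!]'=\beta'$; $[\![F_sA]\!]=\mathrm{Pos}(s)\to[\![A]\!]$, $[\![F_sA]\!]'=\mathrm{Pos}(s)\to[\![A]\!]'$ (pointwise); products componentwise; $[\![A+B]\!]=[\![A]\!]+[\![B]\!]$ ($\iota_1,\iota_2$), $[\![A+B]\!]'$ with constructors $\mathsf{cl}\,a',\mathsf{cr}\,b',\mathsf{sl}\,a,\mathsf{sr}\,b,\mathsf{null}$, where $\iota_1x\oplus\mathsf{cl}x'=\iota_1(x\oplus x')$, $\iota_1x\oplus\mathsf{cr}y'=\iota_1x$, $\iota_2y\oplus\mathsf{cl}x'=\iota_2y$,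 $\iota_2y\oplus\mathsf{cr}y'=\iota_2(y\oplus y')$, $z\oplus\mathsf{sl}x=\iota_1x$, $z\oplus\mathsf{sr}y=\iota_2y$, $z\oplus\mathsf{null}=z$; $\iota_1x\ominus\iota_1y=\mathsf{cl}(x\ominus y)$, $\iota_1x\ominus\iota_2y=\mathsf{sl}x$, $\iota_2x\ominus\iota_1y=\mathsf{sr}x$, $\iota_2x\ominus\iota_2y=\mathsf{cr}(x\ominus y)$. An incrementalization of $f:[\![A]\!]\to[\![B]\!]$ is $(C,i,d)$ with $i:[\![A]\!]\to[\![B]\!]\times C$, $d:[\![A]\!]'\to C\to[\![B]\!]'\times C$; it is consistent if $(i\,x)_1=f\,x$, $f(x\oplus x')=f\,x\oplus(d\,x'(i\,x)_2)_1$, $(i(x\oplus x'))_2=(d\,x'(i\,x)_2)_2$. A user-defined operation $o:\mathsf{Op}\,A\,B$ is a function $f_o$ with a consistent incrementalization of $f_o$. Define $\mathsf{iter}\,(C,i,d)\,x\,[\,]=i\,x$, $\mathsf{iter}\,(C,i,d)\,x\,(x'::xs')=(y\oplus y',c_2)$ where $(y,c_1)=\mathsf{iter}\,(C,i,d)\,x\,xs'$, $(y',c_2)=d\,x'\,c_1$; $\mathsf{sum}\,x\,[\,]=x$, $\mathsf{sum}\,x\,(x'::xs')=(\mathsf{sum}\,x\,xs')\oplus x'$. Expressions, typing and denotation ($i:\mathrm{Pos}(s)$; $r:\mathrm{Pos}(s_2)\to\mathrm{Pos}(s_1)$; $p:\mathrm{Pos}(s)\to\mathbb B$; $c\in[\![A]\!]$):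 $e_1;e_2$ (composition, $[\![e_2]\!]\circ[\![e_1]\!]$); $e_1\times e_2:A\times C\leadsto B\times D$ (componentwise); $\mathsf{id}$; $\mathsf{dup}:A\leadsto A\times A$, $x\mapsto(x,x)$; $\mathsf{fst},\mathsf{snd}$; $\mathsf{cst}\,c:B\leadsto A$, $x\mapsto c$; $+:A\times A\leadsto A$, $(x,y)\mapsto x\oplus y$ (only when $[\![A]\!]=[\![A]\!]'$); $\mathsf{op}\,o:A\leadsto B$ denoting $f_o$; $\mathsf{map}\,e:F_sA\leadsto F_sB$, $x\mapsto\lambda i.[\![e]\!](x\,i)$; $\mathsf{zip}:F_sA\times F_sB\leadsto F_s(A\times B)$, $(x,y)\mapsto\lambda i.(x\,i,y\,i)$; $\mathsf{get}\,i:F_sA\leadsto A$, $x\mapsto x\,i$; $\mathsf{set}\,i:A\times F_sA\leadsto F_sA$, $(x,a)\mapsto\lambda j.\,\mathsf{if}\ i=j\ \mathsf{then}\ x\ \mathsf{else}\ a\,j$; $\mathsf{reshape}\,r:F_{s_1}A\leadsto F_{s_2}A$, $x\mapsto\lambda i.x(r\,i)$; $\mathsf{replicate}\,s:A\leadsto F_sA$, $x\mapsto\lambda i.x$; $\mathsf{tp}:F_{s_1}(F_{s_2}A)\leadsto F_{s_2}(F_{s_1}A)$, $x\mapsto\lambda i\lambda j.x\,j\,i$; $\mathsf{filter}\,p:A\times F_sA\leadsto F_sA$, $(x,a)\mapsto\lambda i.\,\mathsf{if}\ p\,i\ \mathsf{then}\ a\,i\ \mathsf{else}\ x$; $\mathsf{inl},\mathsf{inr}$;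 $\mathsf{fuse}:A+A\leadsto A$, $\iota_kx\mapsto x$; $\mathsf{distr}:A\times(B+C)\leadsto A\times B+A\times C$, $(x,\iota_ky)\mapsto\iota_k(x,y)$; $e_1\|e_2:A+C\leadsto B+D$, $\iota_1x\mapsto\iota_1([\![e_1]\!]x)$, $\iota_2x\mapsto\iota_2([\![e_2]\!]x)$. Incrementalization transformation $e\mapsto(C_e,i_e,d_e)$: • $e\in\{\mathsf{id},\mathsf{dup},\mathsf{fst},\mathsf{snd},\mathsf{zip},\mathsf{tp},\mathsf{get}\,i,\mathsf{set}\,i,\mathsf{reshape}\,r,\mathsf{replicate}\,s,\mathsf{filter}\,p\}$: $C_e=\mathsf{Unit}$, $i_ex=([\![e]\!]x,\star)$, $d_ex'\star=(e\text{'s defining equation applied to the change }x',\star)$. $\mathsf{inl}/\mathsf{inr}$: $C=\mathsf{Unit}$, $i\,x=(\iota_kx,\star)$, derivatives $x'\mapsto\mathsf{cl}\,x'$, resp. $y'\mapsto\mathsf{cr}\,y'$. • $\mathsf{cst}\,c$: $C=\mathsf{Unit}$, $i\,x=(c,\star)$, $d\,x'\star=(c\ominus c,\star)$. $+$: $C=\mathsf{Unit}$, $i(x,y)=(x\oplus y,\star)$, $d(x',y')\star=(x'\oplus y',\star)$. $\mathsf{op}\,o$: the given incrementalization. • $f;g$: $C=C_f\times C_g$; $i\,x=(z,(c_1,c_2))$, $(y,c_1)=i_fx$, $(z,c_2)=i_gy$; $d\,x'(c_1,c_2)=(z',(c_1',c_2'))$, $(y',c_1')=d_fx'c_1$, $(z',c_2')=d_gy'c_2$.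 • $f\times g$: $C=C_f\times C_g$, initialization and derivative computed componentwise from those of $f$ and $g$. • $\mathsf{map}_sf$: $C=\mathrm{Pos}(s)\to C_f$, $i\,x=(\lambda j.(i_f(xj))_1,\lambda j.(i_f(xj))_2)$, $d\,x'c=(\lambda j.(d_f(x'j)(cj))_1,\lambda j.(d_f(x'j)(cj))_2)$. • $\mathsf{fuse}$: $C=[\![A]\!]+[\![A]\!]$, $i(\iota_kx)=(x,\iota_kx)$; $d(\mathsf{cl}x')(\iota_1x)=(x',\iota_1(x\oplus x'))$, $d(\mathsf{cr}y')(\iota_1x)=(x\ominus x,\iota_1x)$, $d(\mathsf{cl}x')(\iota_2y)=(y\ominus y,\iota_2y)$, $d(\mathsf{cr}y')(\iota_2y)=(y',\iota_2(y\oplus y'))$, $d(\mathsf{sl}x)(\iota_kx_0)=(x\ominus x_0,\iota_1x)$, $d(\mathsf{sr}y)(\iota_ky_0)=(y\ominus y_0,\iota_2y)$, $d\,\mathsf{null}(\iota_kx)=(x\ominus x,\iota_kx)$. • $\mathsf{distr}$: $C=[\![A]\!]\times([\![B]\!]+[\![C]\!])$, $i(x,\iota_ky)=(\iota_k(x,y),(x,\iota_ky))$; $d(x',\mathsf{cl}y')(x,\iota_1y)=(\mathsf{cl}(x',y'),(x\oplus x',\iota_1(y\oplus y')))$; $d(x',\mathsf{cr}y')(x,\iota_1y)=(\mathsf{cl}(x',y\ominus y),(x\oplus x',\iota_1y))$; $d(x',\mathsf{cl}y')(x,\iota_2y)=(\mathsf{cr}(x',y\ominus y),(x\oplus x',\iota_2y))$;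 $d(x',\mathsf{cr}y')(x,\iota_2y)=(\mathsf{cr}(x',y'),(x\oplus x',\iota_2(y\oplus y')))$; $d(x',\mathsf{sl}y)(x,\_)=(\mathsf{sl}(x\oplus x',y),(x\oplus x',\iota_1y))$; $d(x',\mathsf{sr}y)(x,\_)=(\mathsf{sr}(x\oplus x',y),(x\oplus x',\iota_2y))$; $d(x',\mathsf{null})(x,\iota_1y)=(\mathsf{cl}(x',y\ominus y),(x\oplus x',\iota_1y))$; $d(x',\mathsf{null})(x,\iota_2y)=(\mathsf{cr}(x',y\ominus y),(x\oplus x',\iota_2y))$. • $f\|g$ ($f:A_1\leadsto B_1,g:A_2\leadsto B_2$): $C=C_f\times[\![B_1]\!]+C_g\times[\![B_2]\!]$; $i(\iota_1x)=(\iota_1y,\iota_1(c,y))$ with $(y,c)=i_fx$ (analogously $\iota_2$, $g$); $d(\mathsf{cl}x')(\iota_1(c,y))=(\mathsf{cl}y',\iota_1(c',y\oplus y'))$, $(y',c')=d_fx'c$; $d(\mathsf{cr}x')(\iota_1(c,y))=(\mathsf{null},\iota_1(c,y))$; $d(\mathsf{cl}x')(\iota_2(c,y))=(\mathsf{null},\iota_2(c,y))$; $d(\mathsf{cr}x')(\iota_2(c,y))=(\mathsf{cr}y',\iota_2(c',y\oplus y'))$, $(y',c')=d_gx'c$; with $(y,c)=i_fx$: $d(\mathsf{sl}x)(\iota_1(c_0,y_0))=(\mathsf{cl}(y\ominus y_0),\iota_1(c,y))$, $d(\mathsf{sl}x)(\iota_2\_)=(\mathsf{sl}y,\iota_1(c,y))$;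 with $(y,c)=i_gx$: $d(\mathsf{sr}x)(\iota_1\_)=(\mathsf{sr}y,\iota_2(c,y))$, $d(\mathsf{sr}x)(\iota_2(c_0,y_0))=(\mathsf{cr}(y\ominus y_0),\iota_2(c,y))$; $d\,\mathsf{null}\,z=(\mathsf{null},z)$. *)

(* Defs.v *)
From Stdlib Require Import List.
Record container := {
  shape : Type;
  pos : shape -> Type;
  pos_eqdec : forall (s : shape) (i j : pos s), {i = j} + {i <> j}
}.

Record bcs := {
  bval : Type;
  bchg : Type;
  boplus : bval -> bchg -> bval;
  bominus : bval -> bval -> bchg;
  boplus_ominus : forall x y : bval, boplus x (bominus y x) = y
}.

Inductive schg (X X' Y Y' : Type) : Type :=
| cl (x' : X') | cr (y' : Y') | sl (x : X) | sr (y : Y) | snull.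
Arguments cl {X X' Y Y'} x'.
Arguments cr {X X' Y Y'} y'.
Arguments sl {X X' Y Y'} x.
Arguments sr {X X' Y Y'} y.
Arguments snull {X X' Y Y'}.

Section Calculus.
Variable K : container.
Variable BC : bcs.

Inductive ty : Type :=
| tb : ty
| tF : shape K -> ty -> ty
| tprod : ty -> ty -> ty
| tsum : ty -> ty -> ty.

Fixpoint val (A : ty) : Type :=
  match A with
  | tb => bval BC
  | tF s A => pos K s -> val A
  | tprod A B => (val A * val B)%type
  | tsum A B => (val A + val B)%type
  end.

Fixpoint chg (A : ty) : Type :=
  match A with
  | tb => bchg BC
  | tF s A => pos K s -> chg A
  | tprod A B => (chg A * chg B)%type
  | tsum A B => schg (val A) (chg A) (val B) (chg B)
  end.

Fixpoint oplus (A : ty) : val A -> chg A -> val A :=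
  match A return val A -> chg A -> val A with
  | tb => boplus BC
  | tF s A => fun x x' i => oplus A (x i) (x' i)
  | tprod A B => fun x x' => (oplus A (fst x) (fst x'), oplus B (snd x) (snd x'))
  | tsum A B => fun z z' =>
      match z, z' with
      | inl x, cl x' => inl (oplus A x x')
      | inl x, cr _ => inl x
      | inr y, cl _ => inr y
      | inr y, cr y' => inr (oplus B y y')
      | _, sl x => inl x
      | _, sr y => inr y
      | z, snull => z
      end
  end.

Fixpoint ominus (A : ty) : val A -> val A -> chg A :=
  match A return val A -> val A -> chg A with
  | tb => bominus BC
  | tF s A => fun x y i => ominus A (x i) (y i)
  | tprod A B => fun x y => (ominus A (fst x) (fst y), ominus B (snd x) (snd y))
  | tsum A B => fun z w =>
      match z, w with
      | inl x, inl y => cl (ominus A x y)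
      | inl x, inr _ => sl x
      | inr x, inl _ => sr x
      | inr x, inr y => cr (ominus B x y)
      end
  end.

Arguments oplus {A}.
Arguments ominus {A}.

Record incr (A B : ty) := {
  Cache : Type;
  ini : val A -> val B * Cache;
  der : chg A -> Cache -> chg B * Cache
}.
Arguments Cache {A B} i.
Arguments ini {A B} i _.
Arguments der {A B} i _ _.
Arguments Build_incr {A B} Cache ini der.

Definition consistent (A B : ty) (f : val A -> val B) (I : incr A B) : Prop :=
  (forall x, fst (ini I x) = f x) /\
  (forall x x', f (oplus x x') = oplus (f x) (fst (der I x' (snd (ini I x))))) /\
  (forall x x', snd (ini I (oplus x x')) = snd (der I x' (snd (ini I x)))).

Record Op (A B : ty) := {
  op_fun : val A -> val B;
  op_incr : incr A B;
  op_consistent : consistent A B op_fun op_incr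
}.
Arguments op_fun {A B} o _.
Arguments op_incr {A B} o.
Arguments consistent {A B} f I.


Definition to_chg (A : ty) (H : val A = chg A) (y : val A) : chg A :=
  eq_rect (val A) (fun T : Type => T) y (chg A) H.
Definition to_val (A : ty) (H : val A = chg A) (y : chg A) : val A :=
  eq_rect (chg A) (fun T : Type => T) y (val A) (eq_sym H).
Arguments to_chg {A} H y.
Arguments to_val {A} H y.

Inductive expr : ty -> ty -> Type :=
| ecomp A B C : expr A B -> expr B C -> expr A C
| epar A B C D : expr A B -> expr C D -> expr (tprod A C) (tprod B D)
| eid A : expr A A
| edup A : expr A (tprod A A)
| efst A B : expr (tprod A B) A
| esnd A B : expr (tprod A B) B
| ecst A B (c : val A) : expr B A
| eplus A (H : val A = chg A) : expr (tprod A A) A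
| eop A B (o : Op A B) : expr A B
| emap s A B : expr A B -> expr (tF s A) (tF s B)
| ezip s A B : expr (tprod (tF s A) (tF s B)) (tF s (tprod A B))
| eget s (i : pos K s) A : expr (tF s A) A
| eset s (i : pos K s) A : expr (tprod A (tF s A)) (tF s A)
| ereshape s1 s2 (r : pos K s2 -> pos K s1) A : expr (tF s1 A) (tF s2 A)
| ereplicate s A : expr A (tF s A)
| etp s1 s2 A : expr (tF s1 (tF s2 A)) (tF s2 (tF s1 A))
| efilter s (p : pos K s -> bool) A : expr (tprod A (tF s A)) (tF s A)
| einl A B : expr A (tsum A B)
| einr A B : expr B (tsum A B)
| efuse A : expr (tsum A A) A
| edistr A B C : expr (tprod A (tsum B C)) (tsum (tprod A B) (tprod A C))
| ealt A B C D : expr A B -> expr C D -> expr (tsum A C) (tsum B D).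
Arguments ecomp {A B C}. Arguments epar {A B C D}. Arguments ecst {A B}.
Arguments eplus {A}. Arguments eop {A B}. Arguments emap s {A B}.
Arguments eget {s} i A. Arguments eset {s} i A.
Arguments ereshape {s1 s2} r A. Arguments efilter {s} p A. Arguments ealt {A B C D}.

Fixpoint den (A B : ty) (e : expr A B) : val A -> val B :=
  match e in expr A B return val A -> val B with
  | ecomp e1 e2 => fun x => den _ _ e2 (den _ _ e1 x)
  | epar e1 e2 => fun x => (den _ _ e1 (fst x), den _ _ e2 (snd x))
  | eid _ => fun x => x
  | edup _ => fun x => (x, x)
  | efst _ _ => fun x => fst x
  | esnd _ _ => fun x => snd x
  | ecst c => fun _ => c
  | eplus H => fun x => oplus (fst x) (to_chg H (snd x))
  | eop o => op_fun o
  | emap s e1 => fun x i => den _ _ e1 (x i)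
  | ezip _ _ _ => fun x i => (fst x i, snd x i)
  | eget i _ => fun x => x i
  | eset i _ => fun x j => if pos_eqdec K _ i j then fst x else snd x j
  | ereshape r _ => fun x i => x (r i)
  | ereplicate _ _ => fun x _ => x
  | etp _ _ _ => fun x i j => x j i
  | efilter p _ => fun x i => if p i then snd x i else fst x
  | einl _ _ => fun x => inl x
  | einr _ _ => fun x => inr x
  | efuse _ => fun z => match z with inl x => x | inr x => x end
  | edistr _ _ _ => fun x =>
      match snd x with inl y => inl (fst x, y) | inr y => inr (fst x, y) end
  | ealt e1 e2 => fun z =>
      match z with inl x => inl (den _ _ e1 x) | inr x => inr (den _ _ e2 x) end
  end.

Definition unit_incr (A B : ty) (f : val A -> val B) (f' : chg A -> chg B) : incr A B :=
  @Build_incr A B (unit)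
      (fun x : val A => (f x, tt))
      (fun (x' : chg A) (_ : unit) => (f' x', tt)).

Fixpoint incr_of (A B : ty) (e : expr A B) : incr A B :=
  match e in expr A B return incr A B with
  | @ecomp A B C f g =>
      let If := incr_of _ _ f in let Ig := incr_of _ _ g in
      @Build_incr A C ((Cache If * Cache Ig)%type)
      (fun x : val A => let (y, c1) := ini If x in let (z, c2) := ini Ig y in (z, (c1, c2)))
      (fun (x' : chg A) (c : Cache If * Cache Ig) => let (y', c1') := der If x' (fst c) in
                            let (z', c2') := der Ig y' (snd c) in (z', (c1', c2')))
  | @epar A B C D f g =>
      let If := incr_of _ _ f in let Ig := incr_of _ _ g in
      @Build_incr (tprod A C) (tprod B D) ((Cache If * Cache Ig)%type)
      (fun x : val (tprod A C) => let (y1, c1) := ini If (fst x) in let (y2, c2) := ini Ig (snd x) in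
                         ((y1, y2), (c1, c2)))
      (fun (x' : chg (tprod A C)) (c : Cache If * Cache Ig) => let (y1', c1') := der If (fst x') (fst c) in
                            let (y2', c2') := der Ig (snd x') (snd c) in
                            ((y1', y2'), (c1', c2')))
  | eid A => @unit_incr A A (fun x => x) (fun x' => x')
  | edup A => @unit_incr A (tprod A A) (fun x => (x, x)) (fun x' => (x', x'))
  | efst A B => @unit_incr (tprod A B) A (fun x => fst x) (fun x' => fst x')
  | esnd A B => @unit_incr (tprod A B) B (fun x => snd x) (fun x' => snd x')
  | @ecst A B c => @Build_incr B A (unit)
      (fun _ : val B => (c, tt))
      (fun (_ : chg B) (_ : unit) => (ominus c c, tt))
  | @eplus A H => @Build_incr (tprod A A) A (unit)
      (fun x : val (tprod A A) => (oplus (fst x) (to_chg H (snd x)), tt))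
      (fun (x' : chg (tprod A A)) (_ : unit) =>
                       (to_chg H (oplus (to_val H (fst x')) (snd x')), tt))
  | eop o => op_incr o
  | @emap s A B f =>
      let If := incr_of _ _ f in
      @Build_incr (tF s A) (tF s B) (pos K s -> Cache If)
      (fun x : val (tF s A) => (fun j => fst (ini If (x j)), fun j => snd (ini If (x j))))
      (fun (x' : chg (tF s A)) (c : pos K s -> Cache If) => (fun j => fst (der If (x' j) (c j)),
                             fun j => snd (der If (x' j) (c j))))
  | @ezip s A B => @unit_incr (tprod (tF s A) (tF s B)) (tF s (tprod A B))
                     (fun x i => (fst x i, snd x i)) (fun x' i => (fst x' i, snd x' i))
  | @eget s i A => @unit_incr (tF s A) A (fun x => x i) (fun x' => x' i)
  | @eset s i A => @unit_incr (tprod A (tF s A)) (tF s A)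
                     (fun x j => if pos_eqdec K _ i j then fst x else snd x j)
                     (fun x' j => if pos_eqdec K _ i j then fst x' else snd x' j)
  | @ereshape s1 s2 r A => @unit_incr (tF s1 A) (tF s2 A)
                     (fun x i => x (r i)) (fun x' i => x' (r i))
  | @ereplicate s A => @unit_incr A (tF s A) (fun x _ => x) (fun x' _ => x')
  | @etp s1 s2 A => @unit_incr (tF s1 (tF s2 A)) (tF s2 (tF s1 A))
                     (fun x i j => x j i) (fun x' i j => x' j i)
  | @efilter s p A => @unit_incr (tprod A (tF s A)) (tF s A)
                     (fun x i => if p i then snd x i else fst x)
                     (fun x' i => if p i then snd x' i else fst x')
  | @einl A B => @unit_incr A (tsum A B) (fun x => inl x) (fun x' => cl x')
  | @einr A B => @unit_incr B (tsum A B) (fun x => inr x) (fun y' => cr y')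
  | @efuse A =>
      @Build_incr (tsum A A) A ((val A + val A)%type)
      (fun z : val (tsum A A) => match z with inl x => (x, inl x) | inr x => (x, inr x) end)
      (fun (z' : chg (tsum A A)) (c : val A + val A) =>
           match z', c with
           | cl x', inl x => (x', inl (oplus x x'))
           | cr _, inl x => (ominus x x, inl x)
           | cl _, inr y => (ominus y y, inr y)
           | cr y', inr y => (y', inr (oplus y y'))
           | sl x, inl x0 => (ominus x x0, inl x)
           | sl x, inr x0 => (ominus x x0, inl x)
           | sr y, inl y0 => (ominus y y0, inr y)
           | sr y, inr y0 => (ominus y y0, inr y)
           | snull, inl x => (ominus x x, inl x)
           | snull, inr x => (ominus x x, inr x)
           end)
  | @edistr A B C =>
      @Build_incr (tprod A (tsum B C)) (tsum (tprod A B) (tprod A C)) ((val A * (val B + val C))%type)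
      (fun p : val (tprod A (tsum B C)) => match snd p with
                         | inl y => (inl (fst p, y), (fst p, inl y))
                         | inr y => (inr (fst p, y), (fst p, inr y)) end)
      (fun (p' : chg (tprod A (tsum B C))) (c : val A * (val B + val C)) =>
           let x' := fst p' in let x := fst c in
           match snd p', snd c with
           | cl y', inl y => (cl (x', y'), (oplus x x', inl (oplus y y')))
           | cr _, inl y => (cl (x', ominus y y), (oplus x x', inl y))
           | cl _, inr y => (cr (x', ominus y y), (oplus x x', inr y))
           | cr y', inr y => (cr (x', y'), (oplus x x', inr (oplus y y')))
           | sl y, _ => (sl (oplus x x', y), (oplus x x', inl y))
           | sr y, _ => (sr (oplus x x', y), (oplus x x', inr y))
           | snull, inl y => (cl (x', ominus y y), (oplus x x', inl y))
           | snull, inr y => (cr (x', ominus y y), (oplus x x', inr y))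
           end)
  | @ealt A1 B1 A2 B2 f g =>
      let If := incr_of _ _ f in let Ig := incr_of _ _ g in
      @Build_incr (tsum A1 A2) (tsum B1 B2) (((Cache If * val B1) + (Cache Ig * val B2))%type)
      (fun z : val (tsum A1 A2) => match z with
                         | inl x => let (y, c) := ini If x in (inl y, inl (c, y))
                         | inr x => let (y, c) := ini Ig x in (inr y, inr (c, y)) end)
      (fun (z' : chg (tsum A1 A2)) (cz : (Cache If * val B1) + (Cache Ig * val B2)) =>
           match z', cz with
           | cl x', inl (c, y) => let (y', c') := der If x' c in (cl y', inl (c', oplus y y'))
           | cr _, inl (c, y) => (snull, inl (c, y))
           | cl _, inr (c, y) => (snull, inr (c, y))
           | cr x', inr (c, y) => let (y', c') := der Ig x' c in (cr y', inr (c', oplus y y'))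
           | sl x, inl (c0, y0) => let (y, c) := ini If x in (cl (ominus y y0), inl (c, y))
           | sl x, inr _ => let (y, c) := ini If x in (sl y, inl (c, y))
           | sr x, inl _ => let (y, c) := ini Ig x in (sr y, inr (c, y))
           | sr x, inr (c0, y0) => let (y, c) := ini Ig x in (cr (ominus y y0), inr (c, y))
           | snull, z => (snull, z)
           end)
  end.

(* Side condition: every occurrence of + is at a type A with [[A]] = [[A]]'
   (built into the constructor eplus) and with (+) associative and commutative on [[A]]. *)
Fixpoint wf (A B : ty) (e : expr A B) : Prop :=
  match e with
  | ecomp e1 e2 => wf _ _ e1 /\ wf _ _ e2
  | epar e1 e2 => wf _ _ e1 /\ wf _ _ e2
  | emap _ e1 => wf _ _ e1
  | ealt e1 e2 => wf _ _ e1 /\ wf _ _ e2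
  | @eplus A H =>
      (forall x y z : val A,
          oplus (oplus x (to_chg H y)) (to_chg H z) = oplus x (to_chg H (oplus y (to_chg H z)))) /\
      (forall x y : val A, oplus x (to_chg H y) = oplus y (to_chg H x))
  | _ => True
  end.

Fixpoint iter (A B : ty) (I : incr A B) (x : val A) (xs : list (chg A)) : val B * Cache I :=
  match xs with
  | nil => ini I x
  | x' :: xs' =>
      let (y, c1) := iter _ _ I x xs' in
      let (y', c2) := der I x' c1 in (oplus y y', c2)
  end.

Fixpoint sum (A : ty) (x : val A) (xs : list (chg A)) : val A :=
  match xs with
  | nil => x
  | x' :: xs' => oplus (sum _ x xs') x'
  end.

Arguments den {A B} e _.
Arguments incr_of {A B} e.
Arguments wf {A B} e.
Arguments iter {A B} I x xs.
Arguments sum {A} x xs.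
Arguments unit_incr {A B} f f'.

End Calculus.

Arguments val {K} BC A.
Arguments chg {K} BC A.
Arguments oplus {K BC A} _ _.
Arguments ominus {K BC A} _ _.
Arguments expr {K} BC _ _.
Arguments den {K BC A B} e _.
Arguments incr_of {K BC A B} e.
Arguments wf {K BC A B} e.
Arguments iter {K BC A B} I x xs.
Arguments sum {K BC A} x xs.

(* Main.v *)
Require Import Defs.
From Stdlib Require Import List FunctionalExtensionality.
Arguments to_val {K BC A} H y.
Arguments to_chg {K BC A} H y.
Arguments consistent {K BC A B} f I.
Arguments ini {K BC A B} i _.
Arguments der {K BC A B} i _ _.
Arguments Cache {K BC A B} i.
Arguments op_fun {K BC A B} o _.
Arguments op_incr {K BC A B} o.
Arguments op_consistent {K BC A B} o.

Lemma oplus_ominus K BC (A : ty K) : forall (x y : val BC A), oplus x (ominus y x) = y.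
Proof.
  induction A; simpl; intros.
  - apply boplus_ominus.
  - apply functional_extensionality; intro i; apply IHA.
  - destruct x, y; simpl; f_equal; auto.
  - destruct x, y; simpl; f_equal; auto.
Qed.

Lemma tv_tc K BC (A : ty K) (H : val BC A = chg BC A) u : to_val H (to_chg H u) = u.
Proof. unfold to_val, to_chg. generalize H. generalize (chg BC A). intros T H'. destruct H'. reflexivity. Qed.
Lemma tc_tv K BC (A : ty K) (H : val BC A = chg BC A) u : to_chg H (to_val H u) = u.
Proof. unfold to_val, to_chg. revert u. generalize H. generalize (chg BC A). intros T H'. destruct H'. reflexivity. Qed.

Lemma cons_iter K BC (A B : ty K) (f : val BC A -> val BC B) I : consistent f I ->
  forall x xs, iter I x xs = ini I (sum x xs).
Proof.
  intros [Ha [Hb Hc]] x xs; induction xs; simpl; auto.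
  rewrite IHxs. rewrite (surjective_pairing (ini I (sum x xs))).
  rewrite (surjective_pairing (der I a _)).
  rewrite (surjective_pairing (ini I (oplus _ _))). f_equal.
  - rewrite Ha, Ha, Hb. reflexivity.
  - rewrite Hc. reflexivity.
Qed.

Lemma cons_all K BC (A B : ty K) (e : expr BC A B) : wf e -> consistent (den e) (incr_of e).
Proof.
  induction e; simpl; intro W.
  all: try (split; [|split]; intros; simpl; reflexivity).
  all: try (split; [|split]; intros; simpl; try reflexivity;
    apply functional_extensionality; intro j; destruct (pos_eqdec _ _ _ _); reflexivity).
  all: try (split; [|split]; intros; simpl; try reflexivity;
    apply functional_extensionality; intro j; destruct (p j); reflexivity).
  -
    destruct W as [W1 W2]. destruct (IHe1 W1) as [H1a [H1b H1c]]. destruct (IHe2 W2) as [H2a [H2b H2c]].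
    split; [|split]; intros; simpl.
    + destruct (ini (incr_of e1) x) as [y c1] eqn:E1. destruct (ini (incr_of e2) y) as [z c2] eqn:E2.
      simpl. specialize (H1a x). rewrite E1 in H1a. specialize (H2a y). rewrite E2 in H2a. simpl in *. congruence.
    + destruct (ini (incr_of e1) x) as [y c1] eqn:E1. destruct (ini (incr_of e2) y) as [z c2] eqn:E2. simpl.
      destruct (der (incr_of e1) x' c1) as [y' c1'] eqn:E3. destruct (der (incr_of e2) y' c2) as [z' c2'] eqn:E4. simpl.
      rewrite H1b, E1; simpl; rewrite E3; simpl. specialize (H1a x). rewrite E1 in H1a. simpl in H1a. subst y.
      rewrite H2b, E2; simpl; rewrite E4; simpl. reflexivity.
    + destruct (ini (incr_of e1) x) as [y c1] eqn:E1. destruct (ini (incr_of e2) y) as [z c2] eqn:E2. simpl.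
      destruct (der (incr_of e1) x' c1) as [y' c1'] eqn:E3. destruct (der (incr_of e2) y' c2) as [z' c2'] eqn:E4. simpl.
      destruct (ini (incr_of e1) (oplus x x')) as [u cu] eqn:E5.
      destruct (ini (incr_of e2) u) as [v cv] eqn:E6. simpl.
      pose proof (H1c x x') as K1. rewrite E5, E1 in K1. simpl in K1. rewrite E3 in K1. simpl in K1. subst cu.
      pose proof (H1a (oplus x x')) as K2. rewrite E5, H1b, E1 in K2. simpl in K2. rewrite E3 in K2. simpl in K2. subst u.
      pose proof (H1a x) as K3. rewrite E1 in K3. simpl in K3. subst y.
      pose proof (H2c (den e1 x) y') as K4. rewrite E6, E2 in K4. simpl in K4. rewrite E4 in K4. simpl in K4. congruence.
  -
    destruct W as [W1 W2]. destruct (IHe1 W1) as [H1a [H1b H1c]]. destruct (IHe2 W2) as [H2a [H2b H2c]].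
    split; [|split]; intros [x1 x2]; try intros [x1' x2']; simpl.
    + rewrite (surjective_pairing (ini (incr_of e1) x1)), (surjective_pairing (ini (incr_of e2) x2)). simpl. congruence.
    + rewrite (surjective_pairing (ini (incr_of e1) x1)), (surjective_pairing (ini (incr_of e2) x2)). simpl.
      rewrite (surjective_pairing (der (incr_of e1) x1' _)), (surjective_pairing (der (incr_of e2) x2' _)). simpl.
      rewrite H1b, H2b. reflexivity.
    + rewrite (surjective_pairing (ini (incr_of e1) x1)), (surjective_pairing (ini (incr_of e2) x2)). simpl.
      rewrite (surjective_pairing (der (incr_of e1) x1' _)), (surjective_pairing (der (incr_of e2) x2' _)). simpl.
      rewrite (surjective_pairing (ini (incr_of e1) (oplus x1 x1'))), (surjective_pairing (ini (incr_of e2) (oplus x2 x2'))). simpl.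
      rewrite H1c, H2c. reflexivity.
  -
    split; [|split]; intros; simpl; try reflexivity. symmetry; apply oplus_ominus.
  -
    destruct W as [Wa Wc].
    split; [|split]; intros; simpl; try reflexivity.
    destruct x as [x y], x' as [u v]; simpl.
    rewrite <- (tc_tv _ _ _ H u), <- (tc_tv _ _ _ H v), tv_tc.
    set (a := to_val H u). set (b := to_val H v).
    rewrite Wa, Wa. f_equal. f_equal.
    rewrite (Wc a), Wa, (Wc b). reflexivity.
  - apply op_consistent.
  -
    destruct (IHe W) as [Ha [Hb Hc]].
    split; [|split]; intros; simpl; apply functional_extensionality; intro j; auto.
  -
    split; [|split]; intros; simpl.
    + destruct x; reflexivity.
    + destruct x as [x|x]; destruct x'; simpl; rewrite ?oplus_ominus; reflexivity.
    + destruct x as [x|x]; destruct x'; simpl; reflexivity.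
  -
    split; [|split]; intros; simpl.
    + destruct x as [a [b|b]]; reflexivity.
    + destruct x as [a [b|b]]; destruct x' as [a' [b'|b'|b'|b'|]]; simpl; rewrite ?oplus_ominus; reflexivity.
    + destruct x as [a [b|b]]; destruct x' as [a' [b'|b'|b'|b'|]]; simpl; reflexivity.
  -
    destruct W as [W1 W2]. destruct (IHe1 W1) as [H1a [H1b H1c]]. destruct (IHe2 W2) as [H2a [H2b H2c]].
    split; [|split]; intros; simpl.
    + destruct x as [x|x].
      * rewrite (surjective_pairing (ini (incr_of e1) x)). simpl. congruence.
      * rewrite (surjective_pairing (ini (incr_of e2) x)). simpl. congruence.
    + destruct x as [x|x].
      * rewrite (surjective_pairing (ini (incr_of e1) x)). simpl.
        destruct x' as [x'|x'|x'|x'|]; simpl.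
        -- rewrite (surjective_pairing (der (incr_of e1) x' _)). simpl; rewrite ?H1c, ?H2c, ?H1a, ?H2a, ?H1b, ?H2b, ?oplus_ominus; reflexivity.
        -- simpl; rewrite ?H1c, ?H2c, ?H1a, ?H2a, ?H1b, ?H2b, ?oplus_ominus; reflexivity.
        -- rewrite (surjective_pairing (ini (incr_of e1) x')). simpl; rewrite ?H1c, ?H2c, ?H1a, ?H2a, ?H1b, ?H2b, ?oplus_ominus; reflexivity.
        -- rewrite (surjective_pairing (ini (incr_of e2) x')). simpl; rewrite ?H1c, ?H2c, ?H1a, ?H2a, ?H1b, ?H2b, ?oplus_ominus; reflexivity.
        -- simpl; rewrite ?H1c, ?H2c, ?H1a, ?H2a, ?H1b, ?H2b, ?oplus_ominus; reflexivity.
      * rewrite (surjective_pairing (ini (incr_of e2) x)). simpl.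
        destruct x' as [x'|x'|x'|x'|]; simpl.
        -- simpl; rewrite ?H1c, ?H2c, ?H1a, ?H2a, ?H1b, ?H2b, ?oplus_ominus; reflexivity.
        -- rewrite (surjective_pairing (der (incr_of e2) x' _)). simpl; rewrite ?H1c, ?H2c, ?H1a, ?H2a, ?H1b, ?H2b, ?oplus_ominus; reflexivity.
        -- rewrite (surjective_pairing (ini (incr_of e1) x')). simpl; rewrite ?H1c, ?H2c, ?H1a, ?H2a, ?H1b, ?H2b, ?oplus_ominus; reflexivity.
        -- rewrite (surjective_pairing (ini (incr_of e2) x')). simpl; rewrite ?H1c, ?H2c, ?H1a, ?H2a, ?H1b, ?H2b, ?oplus_ominus; reflexivity.
        -- simpl; rewrite ?H1c, ?H2c, ?H1a, ?H2a, ?H1b, ?H2b, ?oplus_ominus; reflexivity.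
    + destruct x as [x|x].
      * rewrite (surjective_pairing (ini (incr_of e1) x)). simpl.
        destruct x' as [x'|x'|x'|x'|]; simpl.
        -- rewrite (surjective_pairing (der (incr_of e1) x' _)). rewrite (surjective_pairing (ini (incr_of e1) (oplus x x'))). simpl; rewrite ?H1c, ?H2c, ?H1a, ?H2a, ?H1b, ?H2b, ?oplus_ominus; reflexivity.
        -- rewrite (surjective_pairing (ini (incr_of e1) x)). simpl; rewrite ?H1c, ?H2c, ?H1a, ?H2a, ?H1b, ?H2b, ?oplus_ominus; reflexivity.
        -- rewrite (surjective_pairing (ini (incr_of e1) x')). simpl; rewrite ?H1c, ?H2c, ?H1a, ?H2a, ?H1b, ?H2b, ?oplus_ominus; reflexivity.
        -- rewrite (surjective_pairing (ini (incr_of e2) x')). simpl; rewrite ?H1c, ?H2c, ?H1a, ?H2a, ?H1b, ?H2b, ?oplus_ominus; reflexivity.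
        -- rewrite (surjective_pairing (ini (incr_of e1) x)). simpl; rewrite ?H1c, ?H2c, ?H1a, ?H2a, ?H1b, ?H2b, ?oplus_ominus; reflexivity.
      * rewrite (surjective_pairing (ini (incr_of e2) x)). simpl.
        destruct x' as [x'|x'|x'|x'|]; simpl.
        -- rewrite (surjective_pairing (ini (incr_of e2) x)). simpl; rewrite ?H1c, ?H2c, ?H1a, ?H2a, ?H1b, ?H2b, ?oplus_ominus; reflexivity.
        -- rewrite (surjective_pairing (der (incr_of e2) x' _)). rewrite (surjective_pairing (ini (incr_of e2) (oplus x x'))). simpl; rewrite ?H1c, ?H2c, ?H1a, ?H2a, ?H1b, ?H2b, ?oplus_ominus; reflexivity.
        -- rewrite (surjective_pairing (ini (incr_of e1) x')). simpl; rewrite ?H1c, ?H2c, ?H1a, ?H2a, ?H1b, ?H2b, ?oplus_ominus; reflexivity.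
        -- rewrite (surjective_pairing (ini (incr_of e2) x')). simpl; rewrite ?H1c, ?H2c, ?H1a, ?H2a, ?H1b, ?H2b, ?oplus_ominus; reflexivity.
        -- rewrite (surjective_pairing (ini (incr_of e2) x)). simpl; rewrite ?H1c, ?H2c, ?H1a, ?H2a, ?H1b, ?H2b, ?oplus_ominus; reflexivity.
Qed.

Theorem theorem5p6 (K : container) (BC : bcs) (A B : ty K) (e : expr BC A B)
  (He : wf e) (x : val BC A) (xs : list (chg BC A)) :
  fst (iter (incr_of e) x xs) = den e (sum x xs).
Proof.
  pose proof (cons_all K BC A B e He) as C.
  rewrite (cons_iter _ _ _ _ _ _ C). apply (proj1 C).
Qed.
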